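(* Let $\{S;\tilde w_1,\dots,\tilde w_N;p_1,\dots,p_N\}$ be a DIFS. Let $I\subset\{1,\dots,N\}$ be the set of indices $i$ for which the minimal absorbing set $\mathcal M[\tilde w_i,S]$ exists, and suppose $I\neq\varnothing$. Let $\mathcal A_{\mathcal F}$ be the family of the recurrent communication classes of the associated Markov chain. Then: (a) $|\mathcal A_{\mathcal F}|\le\min_{i\in I}\mathcal M_\#[\tilde w_i,S]$, where $\mathcal M_\#[\tilde w_i,S]$ denotes the number of components of $\mathcal M[\tilde w_i,S]$; (b) if for some $i,j\in I$ one has $\mathcal M[\tilde w_i,S]\subset\mathcal B[\mathcal M_k[\tilde w_j,S]]$ for some component $\mathcal M_k[\tilde w_j,S]$ of $\mathcal M[\tilde w_j,S]$, then $|\mathcal A_{\mathcal F}|\le1$.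
   Context: $\mathcal D^n(\delta)=\{\delta m:m\in\mathbb Z^n\}$ for fixed $\delta>0$; $\mathbb N=\{1,2,\dots\}$. A DIFS $\{S;\tilde w_1,\dots,\tilde w_N;p_1,\dots,p_N\}$ consists of $S\subset\mathcal D^n(\delta)$, maps $\tilde w_i:S\to S$, and functions $p_i:S\to(0,1]$ with $\sum_ip_i(\tilde x)=1$ for every $\tilde x\in S$; its associated Markov chain on $S$ has transition probabilities $P(\tilde x,\tilde y)=\sum_ip_i(\tilde x)\mathbf 1_{\{\tilde y\}}(\tilde w_i(\tilde x))$. Accessibility: $P^k(\tilde x,\tilde y)>0$ for some $k\ge1$; a communication class is a maximal nonempty set of mutually accessible states; a state is recurrent if the chain started there returns to it in finitely many steps a.s.; a recurrent communication class is a communication class of recurrent states. Absorbing sets: for a map $\tilde w$ and nonempty $C$ with $\tilde w(C)\subset C$, a set $\Lambda\subset C$ is absorbing for $\tilde w$ in $C$ if for each $\tilde x\in C$ there is $N$ with $\tilde w^{\circ i}(\tilde x)\in\Lambda$ for all $i\ge N$. If the intersection of all absorbing sets for $\tilde w$ in $C$ is itself absorbing in $C$, it is the minimal absorbing set $\mathcal M[\tilde w,C]$ (and it is said to exist). Its components are the equivalence classes of the relation $\tilde x\sim\tilde y\iff\tilde w^{\circ j}(\tilde x)=\tilde w^{\circ l}(\tilde y)$ for some $j,l\in\mathbb N$; the basin of a component $\mathcal M_k$ is $\mathcal B[\mathcal M_k]=\{\tilde x\in C:\exists i\in\mathbb N,\ \tilde w^{\circ i}(\tilde x)\in\mathcal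 M_k\}$. *)

(* Defs.v *)
From HB Require Import structures.
From mathcomp Require Import all_boot all_order all_algebra.
From mathcomp Require Import all_classical all_reals all_analysis.
Set Implicit Arguments. Unset Strict Implicit. Unset Printing Implicit Defensive.
Import Order.TTheory GRing.Theory Num.Theory numFieldNormedType.Exports.
Local Open Scope classical_set_scope.
Local Open Scope ring_scope.

(* Points of R^n are row vectors 'rV[R]_n.  Indices {1,..,N} are 'I_N (0-based). *)

Section Defs.
Variables (R : realType) (n : nat).
Local Notation X := 'rV[R]_n.

Definition lattice (delta : R) : set X :=
  [set x | exists m : 'rV[int]_n, forall j, x ord0 j = delta * (m ord0 j)%:~R].

(* DIFS {S; w_1..w_N; p_1..p_N}: maps are total functions, only their
   behaviour on S matters. *)
Definition is_DIFS (delta : R) (N : nat) (S : set X)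
    (w : 'I_N -> X -> X) (p : 'I_N -> X -> R) : Prop :=
  [/\ 0 < delta, S `<=` lattice delta,
      (forall i x, S x -> S (w i x)),
      (forall i x, S x -> 0 < p i x <= 1) &
      (forall x, S x -> \sum_(i < N) p i x = 1)].

Definition trans N (w : 'I_N -> X -> X) (p : 'I_N -> X -> R) (x y : X) : R :=
  \sum_(i < N) p i x * (w i x == y)%:R.

(* k-step transition probabilities P^k(x,y); since P(x,.) is supported on
   {w_i x}, Chapman-Kolmogorov P^{k+1}(x,y) = sum_z P(x,z) P^k(z,y) reduces to
   the finite sum below. *)
Fixpoint transk N (w : 'I_N -> X -> X) (p : 'I_N -> X -> R) (k : nat) (x y : X) : R :=
  match k with
  | 0 => (x == y)%:R
  | k'.+1 => \sum_(i < N) p i x * transk w p k' (w i x) y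
  end.

Definition accessible N (w : 'I_N -> X -> X) (p : 'I_N -> X -> R) (x y : X) : Prop :=
  exists k, (0 < k)%N /\ 0 < transk w p k x y.

Definition mutually_accessible N (w : 'I_N -> X -> X) (p : 'I_N -> X -> R)
    (S C : set X) : Prop :=
  C `<=` S /\ (forall x y, C x -> C y -> accessible w p x y /\ accessible w p y x).

Definition comm_class N (w : 'I_N -> X -> X) (p : 'I_N -> X -> R) (S C : set X) : Prop :=
  [/\ C !=set0, mutually_accessible w p S C &
      forall D, C `<=` D -> mutually_accessible w p S D -> D = C].

Fixpoint first_passage N (w : 'I_N -> X -> X) (p : 'I_N -> X -> R) (k : nat) (x y : X) : R :=
  match k with
  | 0 => 0
  | 1 => trans w p x y
  | k'.+1 => \sum_(i < N) p i x * (w i x != y)%:R * first_passage w p k' (w i x) y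
  end.

Definition recurrent N (w : 'I_N -> X -> X) (p : 'I_N -> X -> R) (S : set X) (x : X) : Prop :=
  S x /\ (fun m : nat => \sum_(k < m) first_passage w p k.+1 x x) @ \oo --> (1 : R).

Definition recurrent_class N (w : 'I_N -> X -> X) (p : 'I_N -> X -> R) (S C : set X) : Prop :=
  comm_class w p S C /\ (forall x, C x -> recurrent w p S x).

Definition absorbing (f : X -> X) (C L : set X) : Prop :=
  L `<=` C /\ forall x, C x -> exists M : nat, forall i, (M <= i)%N -> L (iter i f x).

Definition min_abs_set (f : X -> X) (C : set X) : set X :=
  [set x | forall L, absorbing f C L -> L x].

Definition MAS_exists (f : X -> X) (C : set X) : Prop :=
  absorbing f C (min_abs_set f C).

Definition orbit_rel (f : X -> X) (x y : X) : Prop :=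
  exists j l : nat, [/\ (0 < j)%N, (0 < l)%N & iter j f x = iter l f y].

Definition component (f : X -> X) (C K : set X) : Prop :=
  exists x, min_abs_set f C x /\
    K = [set y | min_abs_set f C y /\ orbit_rel f x y].

Definition basin (f : X -> X) (C K : set X) : set X :=
  [set x | C x /\ exists i : nat, (0 < i)%N /\ K (iter i f x)].

End Defs.

(* Main.v *)
Require Import Defs.
From HB Require Import structures.
From mathcomp Require Import all_boot all_order all_algebra.
From mathcomp Require Import all_classical all_reals all_analysis.
Import Order.TTheory GRing.Theory Num.Theory numFieldNormedType.Exports.
Local Open Scope classical_set_scope.
Local Open Scope ring_scope.
Set Implicit Arguments. Unset Strict Implicit. Unset Printing Implicit Defensive.

Section Aux.
Variables (R : realType) (n N : nat) (S : set 'rV[R]_n).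
Variables (w : 'I_N -> 'rV[R]_n -> 'rV[R]_n) (p : 'I_N -> 'rV[R]_n -> R).
Hypothesis Hw : forall i x, S x -> S (w i x).
Hypothesis Hp : forall i x, S x -> 0 < p i x <= 1.
Hypothesis Hs : forall x, S x -> \sum_(i < N) p i x = 1.

Lemma transk_ge0 k x y : S x -> 0 <= transk w p k x y.
Proof.
elim: k x => [|k IH] x Sx /=; first by rewrite ler0n.
apply: sumr_ge0 => i _; apply: mulr_ge0; last exact: IH (Hw i Sx).
by case/andP: (Hp i Sx) => /ltW.
Qed.

Lemma transk_add a b x z y : S x -> S z ->
  transk w p a x z * transk w p b z y <= transk w p (a + b) x y.
Proof.
elim: a x => [|a IH] x Sx Sz /=.
  case: eqP => [->|_]; first by rewrite mul1r.
  by rewrite mul0r transk_ge0.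
rewrite mulr_suml; apply: ler_sum => i _.
rewrite -mulrA; apply: ler_wpM2l; first by case/andP: (Hp i Sx) => /ltW.
exact: IH (Hw i Sx) Sz.
Qed.

Lemma acc_trans x z y : S x -> S z -> accessible w p x z -> accessible w p z y ->
  accessible w p x y.
Proof.
move=> Sx Sz [a [a0 ha]] [b [b0 hb]]; exists (a + b)%N; split.
  by rewrite addn_gt0 a0.
apply: (lt_le_trans _ (transk_add a b y Sx Sz)); exact: mulr_gt0.
Qed.

Lemma acc_step i x : S x -> accessible w p x (w i x).
Proof.
move=> Sx; exists 1%N; split => //=.
rewrite (bigD1 i) //= eqxx mulr1.
apply: (@lt_le_trans _ _ (p i x)); first by case/andP: (Hp i Sx).
rewrite lerDl.
apply: sumr_ge0 => j _; apply: mulr_ge0; last by case: eqP.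
by case/andP: (Hp j Sx) => /ltW.
Qed.

Lemma fp_bounds k z x : S z ->
  0 <= first_passage w p k z x <= transk w p k z x.
Proof.
elim: k z => [|k IH] z Sz; first by rewrite /= lexx ler0n.
case: k IH => [|k] IH.
  rewrite /= /trans; apply/andP; split.
    apply: sumr_ge0 => i _; apply: mulr_ge0; last by case: eqP.
    by case/andP: (Hp i Sz) => /ltW.
  by [].
change (first_passage w p k.+2 z x) with
  (\sum_(i < N) p i z * (w i z != x)%:R * first_passage w p k.+1 (w i z) x).
change (transk w p k.+2 z x) with
  (\sum_(i < N) p i z * transk w p k.+1 (w i z) x).
apply/andP; split.
  apply: sumr_ge0 => i _; have /andP[h0 _] := IH _ (Hw i Sz).
  apply: mulr_ge0 => //; apply: mulr_ge0; last by case: eqP.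
  by case/andP: (Hp i Sz) => /ltW.
apply: ler_sum => i _; rewrite -mulrA; apply: ler_wpM2l.
  by case/andP: (Hp i Sz) => /ltW.
have /andP[h0 h1] := IH _ (Hw i Sz).
case: eqP => _ /=; first by rewrite mul0r; apply: le_trans h1.
by rewrite mul1r.
Qed.

Definition G x m z := \sum_(k < m) first_passage w p k.+1 z x.

Lemma G_rec x m z : G x m.+1 z =
  \sum_(i < N) p i z * ((w i z == x)%:R + (w i z != x)%:R * G x m (w i z)).
Proof.
rewrite /G big_ord_recl /=.
have -> : \sum_(i < m) first_passage w p (lift ord0 i).+1 z x =
  \sum_(k < m) \sum_(i < N) p i z * ((w i z != x)%:R * first_passage w p k.+1 (w i z) x).
  by apply: eq_bigr => k _; apply: eq_bigr => i _; rewrite mulrA.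
rewrite exchange_big /= /trans -big_split /=; apply: eq_bigr => i _.
by rewrite mulrDr -mulr_sumr -mulr_sumr.
Qed.

Lemma G_bounds x m z : S z -> 0 <= G x m z <= 1.
Proof.
elim: m z => [|m IH] z Sz; first by rewrite /G big_ord0 lexx ler01.
rewrite G_rec; apply/andP; split.
  apply: sumr_ge0 => i _; have /andP[h0 _] := IH _ (Hw i Sz).
  apply: mulr_ge0; first by case/andP: (Hp i Sz) => /ltW.
  by case: eqP => _ /=; rewrite ?mul0r ?mul1r ?add0r ?addr0.
rewrite -[leRHS](Hs Sz); apply: ler_sum => i _.
rewrite -{2}(mulr1 (p i z)); apply: ler_wpM2l; first by case/andP: (Hp i Sz) => /ltW.
have /andP[_ h1] := IH _ (Hw i Sz).
by case: eqP => _ /=; rewrite ?mul0r ?mul1r ?add0r ?addr0.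
Qed.

Lemma comm_class_inter C1 C2 z : comm_class w p S C1 -> comm_class w p S C2 ->
  C1 z -> C2 z -> C1 = C2.
Proof.
move=> [_ [s1 m1] max1] [_ [s2 m2] max2] z1 z2.
have mD : mutually_accessible w p S (C1 `|` C2).
  split; first by move=> y [/s1|/s2].
  have gen : forall a b, (C1 `|` C2) a -> (C1 `|` C2) b -> accessible w p a b.
    move=> a b Ha Hb.
    have az : accessible w p a z by case: Ha => Ha; [case: (m1 a z)|case: (m2 a z)].
    have zb : accessible w p z b by case: Hb => Hb; [case: (m1 z b)|case: (m2 z b)].
    have Sa : S a by case: Ha => [/s1|/s2].
    exact: acc_trans Sa (s1 _ z1) az zb.
  by move=> a b Ha Hb; split; apply: gen.
have e1 := max1 _ (@subsetUl _ C1 C2) mD.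
have e2 := max2 _ (@subsetUr _ C1 C2) mD.
by rewrite -e1 e2.
Qed.

Lemma rec_closed C x i : recurrent_class w p S C -> C x -> C (w i x).
Proof.
move=> [[ne [sC mC] maxC] recC] Cx.
have Sx := sC _ Cx; set y := w i x.
have Sy : S y by exact: Hw.
have yx : accessible w p y x.
  apply: contrapT => nyx.
  have yneq : y != x.
    apply/eqP => eyx; apply: nyx; rewrite eyx; move: (acc_step i Sx); by rewrite -/y eyx.
  have Gy0 : forall m, G x m y = 0.
    move=> m; rewrite /G big1 // => k _.
    have /andP[h0 h1] := fp_bounds k.+1 x Sy.
    apply/eqP; rewrite eq_le h0 andbT; apply: le_trans h1 _.
    rewrite leNgt; apply/negP => hp; apply: nyx; by exists k.+1.
  have bnd : forall m, G x m x <= 1 - p i x.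
    case=> [|m].
      by rewrite /G big_ord0 subr_ge0; case/andP: (Hp i Sx).
    rewrite G_rec -[X in _ <= X - _](Hs Sx) (bigD1 i) //= (bigD1 i (P := xpredT)) //= -/y.
    rewrite (negPf yneq) Gy0 mulr0 addr0 mulr0 add0r addrAC subrr add0r.
    apply: ler_sum => j _; rewrite -{2}(mulr1 (p j x)).
    apply: ler_wpM2l; first by case/andP: (Hp j Sx) => /ltW.
    have /andP[_ h1] := G_bounds x m (Hw j Sx).
    by case: eqP => _ /=; rewrite ?mul0r ?mul1r ?add0r ?addr0.
  have [_ hcv] := recC _ Cx.
  have := limr_le (cvgP _ hcv) (nearW _ bnd).
  rewrite (cvg_lim _ hcv) //.
  move=> /(_ _ _) H1; have {}H1 := H1.
  have : (1:R) <= 1 - p i x by apply: H1; exact: _.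
  rewrite lerBrDr gerDl leNgt.
  by case/andP: (Hp i Sx) => ->.
have mD : mutually_accessible w p S (C `|` [set y]).
  split; first by move=> a [/sC|->].
  have gen : forall a b, (C `|` [set y]) a -> (C `|` [set y]) b -> accessible w p a b.
    move=> a b Ha Hb.
    have ax : accessible w p a x.
      by case: Ha => [Ha|->] //; case: (mC a x).
    have xb : accessible w p x b.
      case: Hb => [Hb|->]; first by case: (mC x b).
      exact: acc_step.
    have Sa : S a by case: Ha => [/sC|->].
    exact: acc_trans Sa Sx ax xb.
  by move=> a b Ha Hb; split; apply: gen.
have e := maxC _ (@subsetUl _ C [set y]) mD.
by rewrite -e; right.
Qed.

Lemma rec_iter C x i k : recurrent_class w p S C -> C x -> C (iter k (w i) x).
Proof.
move=> hC Cx; elim: k => [|k IH] //; rewrite iterS; exact: rec_closed.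
Qed.

Lemma rec_hits C i : recurrent_class w p S C -> MAS_exists (w i) S ->
  exists y, C y /\ min_abs_set (w i) S y.
Proof.
move=> hC [_ hab]; have [[[x Cx] [sC _] _] _] := hC.
have [M HM] := hab x (sC _ Cx).
exists (iter M (w i) x); split; [exact: rec_iter | exact: HM].
Qed.

End Aux.

Lemma iter_meet (R : realType) (n : nat) (f : 'rV[R]_n -> 'rV[R]_n) x0 z1 z2 :
  orbit_rel f x0 z1 -> orbit_rel f x0 z2 ->
  exists a b, iter a f z1 = iter b f z2.
Proof.
move=> [j1 [l1 [_ _ e1]]] [j2 [l2 [_ _ e2]]].
exists (j2 + l1)%N, (j1 + l2)%N.
by rewrite !iterD -e1 -e2 -!iterD addnC.
Qed.


Theorem theorem12 (R : realType) (n : nat) (delta : R) (N : nat)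
    (S : set 'rV[R]_n) (w : 'I_N -> 'rV[R]_n -> 'rV[R]_n)
    (p : 'I_N -> 'rV[R]_n -> R) :
  is_DIFS delta S w p ->
  (exists i : 'I_N, MAS_exists (w i) S) ->
  (forall i : 'I_N, MAS_exists (w i) S ->
     exists f : {C : set 'rV[R]_n | recurrent_class w p S C} ->
                {K : set 'rV[R]_n | component (w i) S K},
       injective f) /\
  (forall i j : 'I_N, MAS_exists (w i) S -> MAS_exists (w j) S ->
     (exists K, component (w j) S K /\
        min_abs_set (w i) S `<=` basin (w j) S K) ->
     forall C1 C2, recurrent_class w p S C1 -> recurrent_class w p S C2 -> C1 = C2).
Proof.
move=> [_ _ Hw Hp Hs] _.
have Hcl := rec_closed Hw Hp Hs.
have Hit : forall C x i k, recurrent_class w p S C -> C x -> C (iter k (w i) x).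
  move=> C x i k hC Cx; elim: k => [|k IH] //; rewrite iterS; exact: Hcl.
have Hhit := rec_hits Hw Hp Hs.
split.
  move=> i Mi.
  have H : forall C : {C : set 'rV[R]_n | recurrent_class w p S C},
      {y | sval C y /\ min_abs_set (w i) S y}.
    by move=> [C hC]; apply: cid; exact: Hhit.
  pose Kof y := [set z | min_abs_set (w i) S z /\ orbit_rel (w i) y z].
  have HK : forall C, component (w i) S (Kof (sval (H C))).
    by move=> C; exists (sval (H C)); split => //; case: (svalP (H C)).
  exists (fun C => exist _ (Kof (sval (H C))) (HK C)).
  move=> [C1 h1] [C2 h2] /(congr1 sval) /= e.
  have [c1 m1] := svalP (H (exist _ C1 h1)).
  have [c2 m2] := svalP (H (exist _ C2 h2)).
  set y1 := sval (H (exist _ C1 h1)) in e c1 m1.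
  set y2 := sval (H (exist _ C2 h2)) in e c2 m2.
  have : Kof y2 y1 by rewrite -e; split => //; exists 1%N, 1%N.
  move=> [_ [a [b [_ _ eab]]]].
  have E : C1 = C2.
    apply: (comm_class_inter Hw Hp h1.1 h2.1 (z := iter b (w i) y1)).
      exact: Hit.
    by rewrite -eab; exact: Hit.
  subst C2; congr exist; exact: Prop_irrelevance.
move=> i j Mi _ [K [[x0 [_ eK]] sub]] C1 C2 h1 h2.
have [y1 [c1 m1]] := Hhit _ _ h1 Mi.
have [y2 [c2 m2]] := Hhit _ _ h2 Mi.
have [_ [a1 [_ k1]]] := sub _ m1.
have [_ [a2 [_ k2]]] := sub _ m2.
rewrite eK in k1 k2.
have [a [b e]] := iter_meet k1.2 k2.2.
apply: (comm_class_inter Hw Hp h1.1 h2.1 (z := iter a (w j) (iter a1 (w j) y1))).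
  by apply: (Hit _ _ _ _ h1); apply: (Hit _ _ _ _ h1).
by rewrite e; apply: (Hit _ _ _ _ h2); apply: (Hit _ _ _ _ h2).
Qed.
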